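(* Let $n\ge 3$ and let $f(x)=\sum_{i=0}^n a_ix^i$ be a complex polynomial with $a_n\ne 0$, written as $f(x)=a_n(x+x_1)\cdots(x+x_n)$ with $x_1,\dots,x_n\in\mathbb{C}$. For each of the $n!$ permutations $\sigma_s$ ($s=1,\dots,n!$) of the positions $\{1,\dots,n\}$, let $x_{is}=x_{\sigma_s(i)}$ and define $b_{1s},\dots,b_{(n-1)s}$ by $x_{is}=x_{(i-1)s}+\sum_{j=1}^{i-1}b_{js}$ for $i=2,\dots,n$. Let $D_n=(n-1)!^2a_{n-1}^2-2\,n!\,(n-2)!\,a_na_{n-2}$. Then $$\frac{D_n}{a_n^2}=-\frac{1}{3}(n-1)!\sum_{s=1}^{n!}b_{1s}b_{2s};$$ and if $n\ge 4$, then for every $i=0,\dots,n-4$, $$\frac{D_n}{a_n^2}=(n-1)!\sum_{s=1}^{n!}b_{(1+i)s}b_{(3+i)s},\qquad \frac{D_n}{a_n^2}=-\frac{1}{4}(n-1)!\sum_{s=1}^{n!}b_{(2+i)s}b_{(3+i)s}.$$ Moreover, for all indices $1\le j<k\le n-1$ with $(j,k)$ not of the form $(1,2)$, $(1+i,3+i)$ or $(2+i,3+i)$ with $0\le i\le n-4$, one has $\sum_{s=1}^{n!}b_{js}b_{ks}=0$.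
   Context: The defining relations are equivalent to $b_{1s}=x_{2s}-x_{1s}$ and $b_{js}=x_{(j+1)s}-2x_{js}+x_{(j-1)s}$ for $2\le j\le n-1$. *)

(* Defs.v *)
From HB Require Import structures.
From mathcomp Require Import all_boot all_order all_algebra all_fingroup.
Set Implicit Arguments. Unset Strict Implicit. Unset Printing Implicit Defensive.
Import Order.TTheory GRing.Theory Num.Theory.
Local Open Scope ring_scope.

(* 1-based access to the permuted roots: xperm x s i = x_{sigma_s(i)} for
   1 <= i <= n (positions are 'I_n, i.e. 0-based internally); 0 outside. *)
Definition xperm (C : nzRingType) (n : nat) (x : 'I_n -> C) (s : 'S_n) (i : nat) : C :=
  match (insub i.-1 : option 'I_n) with
  | Some k => x (s k)
  | None => 0
  end.

(* Main.v *)
Require Import Defs.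
From HB Require Import structures.
From mathcomp Require Import all_boot all_order all_algebra all_fingroup.
From mathcomp Require Import zify ring.
Import Order.TTheory GRing.Theory Num.Theory.
Local Open Scope ring_scope.



Lemma Tre (C : nzRingType) (n : nat) (x : 'I_n -> C) (t : 'S_n) (p q : 'I_n) :
  \sum_(s : 'S_n) x (s (t p)) * x (s (t q)) = \sum_(s : 'S_n) x (s p) * x (s q).
Proof.
rewrite [RHS](reindex_inj (mulgI t)) /=.
by apply: eq_bigr => s _; rewrite !permM.
Qed.

Lemma Tgen (C : nzRingType) (n : nat) (x : 'I_n -> C) (p q p' q' : 'I_n) :
  (p == q) = (p' == q') ->
  \sum_(s : 'S_n) x (s p) * x (s q) = \sum_(s : 'S_n) x (s p') * x (s q').
Proof.
have [<-|npq] := eqVneq p q.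
  move/esym/eqP => <-.
  by rewrite -(@Tre _ _ x (tperm p' p) p' p') tpermL.
move/esym/negbT => npq'.
pose u := tperm p' p.
pose v := tperm (u q') q.
have uq : u q' != p.
  by rewrite /u -{2}(tpermL p' p) (inj_eq (@perm_inj _ _)) eq_sym.
rewrite -(@Tre _ _ x (u * v) p' q') !permM /v tpermL tpermL tpermD //.
by rewrite eq_sym.
Qed.

Lemma vieta (C : comNzRingType) (y : nat -> C) (m : nat) :
  let r := \prod_(i < m) ('X + (y i)%:P) in
  [/\ r`_m = 1, (forall k, (m < k)%N -> r`_k = 0),
      ('X * r)`_m = \sum_(i < m) y i &
      2%:R * ('X * ('X * r))`_m = (\sum_(i < m) y i) ^+ 2 - \sum_(i < m) y i ^+ 2].
Proof.
elim: m => [|m [IH1 IH2 IH3 IH4]] r.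
  rewrite /r big_ord0 !big_ord0 coefC coefXM /=; split => //.
    by case => // k; rewrite coefC.
  by rewrite coefXM /= expr0n /= subr0 mulr0.
have rE : r = (\prod_(i < m) ('X + (y i)%:P)) * 'X + 
   (y m) *: \prod_(i < m) ('X + (y i)%:P).
  by rewrite /r big_ord_recr /= mulrDr -mul_polyC mulrC [_ * (y m)%:P]mulrC.
set q := \prod_(i < m) ('X + (y i)%:P) in rE IH1 IH2 IH3 IH4.
have XE : forall p : {poly C}, 'X * (p * 'X + y m *: p) = ('X * p) * 'X + y m *: ('X * p).
  by move=> p; rewrite mulrDr scalerAr mulrA.
rewrite !big_ord_recr /=.
split.
- by rewrite rE coefD coefMX coefZ /= IH1 IH2 // mulr0 addr0.
- move=> k hk; rewrite rE coefD coefMX coefZ IH2 ?IH2 ?mulr0 ?addr0; try lia.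
  by case: k hk => // k; rewrite /= IH2 //; lia.
- rewrite rE XE coefD coefMX coefZ /= IH3 coefXM /= IH1; ring.
- rewrite rE XE XE coefD coefMX coefZ /=.
  rewrite [('X * ('X * q))`_m.+1]coefXM /= IH3 mulrDr IH4; ring.
Qed.



Lemma sumA (C : comNzRingType) (n : nat) (x : 'I_n -> C) :
  \sum_(p : 'I_n) \sum_(s : 'S_n) x (s p) * x (s p) = (n`!)%:R * \sum_i x i ^+ 2.
Proof.
rewrite exchange_big /=.
rewrite (eq_bigr (fun _ => \sum_i x i ^+ 2)); last first.
  move=> s _; rewrite [RHS](reindex_inj (@perm_inj _ s)) /=.
  by apply: eq_bigr => i _; rewrite expr2.
by rewrite sumr_const card_Sn mulr_natl.
Qed.

Lemma sumB (C : comNzRingType) (n : nat) (x : 'I_n -> C) :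
  \sum_(p : 'I_n) \sum_(q : 'I_n) \sum_(s : 'S_n) x (s p) * x (s q)
  = (n`!)%:R * (\sum_i x i) ^+ 2.
Proof.
rewrite (eq_bigr (fun p => \sum_(s : 'S_n) \sum_(q : 'I_n) x (s p) * x (s q)));
  last by move=> p _; rewrite exchange_big.
rewrite exchange_big /=.
rewrite (eq_bigr (fun _ => (\sum_i x i) ^+ 2)); last first.
  move=> s _; rewrite expr2 mulr_suml.
  rewrite [RHS](reindex_inj (@perm_inj _ s)) /=.
  apply: eq_bigr => i _; rewrite mulr_sumr.
  by rewrite [RHS](reindex_inj (@perm_inj _ s)).
by rewrite sumr_const card_Sn mulr_natl.
Qed.

Lemma sumAB (C : comNzRingType) (n : nat) (x : 'I_n -> C) (p0 p1 : 'I_n) :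
  p0 != p1 ->
  let A := \sum_(s : 'S_n) x (s p0) * x (s p0) in
  let B := \sum_(s : 'S_n) x (s p0) * x (s p1) in
  n%:R * A = (n`!)%:R * \sum_i x i ^+ 2 /\
  n%:R * A + (n * n.-1)%:R * B = (n`!)%:R * (\sum_i x i) ^+ 2.
Proof.
move=> np A B.
have TE : forall p q : 'I_n, \sum_(s : 'S_n) x (s p) * x (s q) = if p == q then A else B.
  move=> p q; case: eqP => [->|/eqP npq]; apply: Tgen.
    by rewrite !eqxx.
  by rewrite (negbTE npq) (negbTE np).
split.
  rewrite -sumA (eq_bigr (fun _ => A)); last by move=> p _; rewrite TE eqxx.
  by rewrite sumr_const card_ord mulr_natl.
rewrite -sumB (eq_bigr (fun _ => A + (n.-1)%:R * B)); last first.
  move=> p _; rewrite (eq_bigr (fun q => if p == q then A else B)); last by move=> q _; rewrite TE.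
  rewrite (bigD1 p) //= eqxx (eq_bigr (fun _ => B)); last first.
    by move=> q; rewrite eq_sym => /negbTE ->.
  rewrite sumr_const mulr_natl; congr (_ + _); congr (_ *+ _).
  by rewrite cardC1 card_ord.
rewrite sumr_const card_ord mulr_natl mulrnDl natrM.
by congr (_ + _); ring.
Qed.



Lemma xpermE (C : nzRingType) (n : nat) (x : 'I_n.+1 -> C) (s : 'S_n.+1) (i : nat) :
  (0 < i <= n.+1)%N -> xperm x s i = x (s (inord i.-1)).
Proof.
move=> hi; rewrite /xperm; case: insubP => [k _ kE|].
  by congr (x (s _)); apply/val_inj; rewrite /= inordK -kE //; lia.
by move/negP; case; lia.
Qed.

Definition Tsum (C : nzRingType) n (x : 'I_n -> C) (p q : 'I_n) :=
  \sum_(s : 'S_n) x (s p) * x (s q).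
Arguments Tsum {C n} x p q.

Lemma sum9 (C : comNzRingType) n (x : 'I_n -> C) (a1 a2 a3 c1 c2 c3 : 'I_n) (w2 w3 v2 v3 : C) :
 \sum_(s : 'S_n) (x (s a1) + w2 * x (s a2) + w3 * x (s a3)) *
                 (x (s c1) + v2 * x (s c2) + v3 * x (s c3)) =
 Tsum x a1 c1 + v2 * Tsum x a1 c2 + v3 * Tsum x a1 c3
 + w2 * Tsum x a2 c1 + w2 * v2 * Tsum x a2 c2 + w2 * v3 * Tsum x a2 c3
 + w3 * Tsum x a3 c1 + w3 * v2 * Tsum x a3 c2 + w3 * v3 * Tsum x a3 c3.
Proof.
rewrite /Tsum !mulr_sumr -!big_split; apply: eq_bigr => s _ /=; ring.
Qed.

Lemma TsumE (C : comNzRingType) n (x : 'I_n.+1 -> C) (a c : nat) :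
  (a <= n)%N -> (c <= n)%N ->
  Tsum x (inord a) (inord c) =
  if a == c then Tsum x (inord 0) (inord 0) else Tsum x (inord 0) (inord 1).
Proof.
move=> ha hc.
have ie : forall u v, (u <= n)%N -> (v <= n)%N -> ((inord u : 'I_n.+1) == inord v) = (u == v).
  move=> u v hu hv; apply/eqP/eqP => [/(congr1 val)|->] //.
  by rewrite /= !inordK.
case: eqP => [->|/eqP nac]; apply: Tgen.
  by rewrite !eqxx.
rewrite ie // ie ?(negbTE nac) //; lia.
Qed.



Ltac solve_ifs := repeat (case: eqP => ?; try (exfalso; lia)).

Theorem mainTheorem2 (C : numClosedFieldType) (n : nat) (f : {poly C})
    (x : 'I_n -> C) (b : 'S_n -> nat -> C) :
  (3 <= n)%N ->
  f`_n != 0 ->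
  f = f`_n *: \prod_(i < n) ('X + (x i)%:P) ->
  (forall (s : 'S_n) (i : nat), (2 <= i <= n)%N ->
     xperm x s i = xperm x s i.-1 + \sum_(1 <= j < i) b s j) ->
  let D := ((n.-1)`!)%:R ^+ 2 * f`_(n.-1) ^+ 2
           - 2%:R * (n`! * (n - 2)`!)%:R * f`_n * f`_(n - 2) in
  [/\ D / f`_n ^+ 2 = - (3%:R)^-1 * ((n.-1)`!)%:R * \sum_(s : 'S_n) b s 1%N * b s 2%N,
      (forall i : nat, (i + 4 <= n)%N ->
         D / f`_n ^+ 2 = ((n.-1)`!)%:R * \sum_(s : 'S_n) b s (1 + i)%N * b s (3 + i)%N
         /\ D / f`_n ^+ 2
            = - (4%:R)^-1 * ((n.-1)`!)%:R * \sum_(s : 'S_n) b s (2 + i)%N * b s (3 + i)%N)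
    & (forall j k : nat, (1 <= j)%N -> (j < k)%N -> (k <= n.-1)%N ->
         ~ ((j, k) = (1%N, 2%N)) ->
         (forall i : nat, (i + 4 <= n)%N ->
            (j, k) <> ((1 + i)%N, (3 + i)%N) /\ (j, k) <> ((2 + i)%N, (3 + i)%N)) ->
         \sum_(s : 'S_n) b s j * b s k = 0)].
Proof.
case: n f x b => [//|n] f x b n3 fn0 Hf H D.
set a := f`_n.+1 in fn0 Hf D *.
set A := Tsum x (inord 0) (inord 0).
set B := Tsum x (inord 0) (inord 1).
pose y i := x (inord i).
have prodE : \prod_(i < n.+1) ('X + (x i)%:P) = \prod_(i < n.+1) ('X + (y i)%:P).
  by apply: eq_bigr => i _; rewrite /y inord_val.
have S1E : \sum_(i < n.+1) y i = \sum_i x i.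
  by apply: eq_bigr => i _; rewrite /y inord_val.
have S2E : \sum_(i < n.+1) y i ^+ 2 = \sum_i x i ^+ 2.
  by apply: eq_bigr => i _; rewrite /y inord_val.
have [V1 _ V3 V4] := vieta C y n.+1.
rewrite S1E S2E in V3 V4.
set S1 := \sum_i x i in V3 V4 *.
set S2 := \sum_i x i ^+ 2 in V3 V4 *.
set r := \prod_(i < n.+1) _ in V1 V3 V4 prodE.
have c1 : f`_n = a * S1.
  by rewrite {1}Hf coefZ prodE -V3 coefXM.
have c2 : 2%:R * f`_(n.+1 - 2) = a * (S1 ^+ 2 - S2).
  rewrite {1}Hf coefZ prodE -V4 coefXM /= coefXM /=.
  have -> : (n.+1 - 2 = n.-1)%N by lia.
  have -> : (n == 0%N) = false by apply/eqP; lia.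
  ring.
have ne01 : (inord 0 : 'I_n.+1) != inord 1.
  apply/eqP => /(congr1 val) /=; rewrite !inordK //; lia.
have [E1 E2] : n.+1%:R * A = (n.+1`!)%:R * S2 /\
   n.+1%:R * A + (n.+1 * n)%:R * B = (n.+1`!)%:R * S1 ^+ 2.
  exact: (sumAB C n.+1 x (inord 0) (inord 1) ne01).
have [m em] : exists m, n = m.+2 by exists n.-2; lia.
subst n.
have h2 : (2%:R : C) != 0 by rewrite pnatr_eq0.
have AE : A = (m.+2 * m.+1 * m`!)%:R * S2.
  apply: (@mulfI _ (m.+3%:R)); first by rewrite pnatr_eq0.
  rewrite E1 !factS !natrM; ring.
have BE : B = (m.+1 * m`!)%:R * (S1 ^+ 2 - S2).
  apply: (@mulfI _ ((m.+3 * m.+2)%:R)); first by rewrite pnatr_eq0.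
  apply: (@addrI _ (m.+3%:R * A)).
  rewrite E2 AE !factS !natrM; ring.
have c2' : f`_(m.+3 - 2) = a * (S1 ^+ 2 - S2) / 2%:R.
  by rewrite -c2; field.
have key : D / a ^+ 2 = ((m.+2)`!)%:R * (A - B).
  by rewrite /D /= c1 c2' AE BE !factS !natrM; field.
pose u2 (j : nat) : C := if j == 1%N then -1 else -2%:R.
pose u3 (j : nat) : C := if j == 1%N then 0 else 1.
have bE : forall s j, (1 <= j <= m.+2)%N ->
    b s j = x (s (inord j)) + u2 j * x (s (inord (j - 1)%N)) + u3 j * x (s (inord (j - 2)%N)).
  move=> s j hj; rewrite /u2 /u3.
  case: eqP => [->|/eqP j1].
    have h := H s 2%N isT.
    rewrite big_nat1 !xpermE // in h.
    rewrite h /=; ring.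
  have g1 := H s j.+1 ltac:(lia).
  have g2 := H s j ltac:(lia).
  rewrite big_nat_recr /= in g1; last by lia.
  rewrite !xpermE /= in g1; try lia.
  rewrite !xpermE /= in g2; try lia.
  have -> : (j - 1 = j.-1)%N by lia.
  have -> : (j - 2 = j.-1.-1)%N by lia.
  rewrite g1 g2; ring.
pose Tv (p q : nat) : C := if p == q then A else B.
have sumbb : forall j k, (1 <= j <= m.+2)%N -> (1 <= k <= m.+2)%N ->
  \sum_s b s j * b s k =
  Tv j k + u2 k * Tv j (k - 1)%N + u3 k * Tv j (k - 2)%N
  + u2 j * Tv (j - 1)%N k + u2 j * u2 k * Tv (j - 1)%N (k - 1)%N + u2 j * u3 k * Tv (j - 1)%N (k - 2)%N
  + u3 j * Tv (j - 2)%N k + u3 j * u2 k * Tv (j - 2)%N (k - 1)%N + u3 j * u3 k * Tv (j - 2)%N (k - 2)%N.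
  move=> j k hj hk.
  under eq_bigr => s _ do rewrite (bE s j hj) (bE s k hk).
  rewrite sum9.
  by rewrite (TsumE _ _ x j k ltac:(lia) ltac:(lia)) (TsumE _ _ x j (k - 1)%N ltac:(lia) ltac:(lia)) (TsumE _ _ x j (k - 2)%N ltac:(lia) ltac:(lia)) (TsumE _ _ x (j - 1)%N k ltac:(lia) ltac:(lia)) (TsumE _ _ x (j - 1)%N (k - 1)%N ltac:(lia) ltac:(lia)) (TsumE _ _ x (j - 1)%N (k - 2)%N ltac:(lia) ltac:(lia)) (TsumE _ _ x (j - 2)%N k ltac:(lia) ltac:(lia)) (TsumE _ _ x (j - 2)%N (k - 1)%N ltac:(lia) ltac:(lia)) (TsumE _ _ x (j - 2)%N (k - 2)%N ltac:(lia) ltac:(lia)).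
rewrite /= in key.
split.
- rewrite key sumbb //.
  by rewrite /Tv /u2 /u3; solve_ifs; rewrite /=; field.
- move=> i hi; rewrite key !sumbb; try lia.
  by rewrite /Tv /u2 /u3; split; solve_ifs; rewrite /=; field.
- move=> j k hj hjk hkn h12 hi.
  have hk : (j + 3 <= k)%N.
    rewrite leqNgt; apply/negP => hlt.
    have [ek|nk] := eqVneq k j.+1.
      have [ej|nj] := eqVneq j 1%N.
        by apply: h12; rewrite ek ej.
      have [_ ] := hi (j - 2)%N ltac:(lia).
      by apply; rewrite ek; congr (_, _); lia.
    have ek : k = j.+2 by lia.
    have [h _] := hi (j - 1)%N ltac:(lia).
    by apply: h; rewrite ek; congr (_, _); lia.
  rewrite sumbb; try lia.
  by rewrite /Tv /u2 /u3; solve_ifs; rewrite /=; ring.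
Qed.
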